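(* Let $n\in\mathbb{Z}\setminus\{0\}$, $c,d\in\mathbb{N}$, and $f:\mathbb{Z}\to\mathbb{C}$, and set $$\mathcal{T}_n(c,d)=\sum_{\substack{a,b\in\mathbb{Z}\setminus\{0\}\\ ad-bc=n}} f(bc),$$ the sum being zero if there are no such $a,b$. If $\gcd(c,d)\nmid n$ then $\mathcal{T}_n(c,d)=0$. If $\gcd(c,d)\mid n$ (and the series converge absolutely), then $$\mathcal{T}_n(c,d)=\sum_{m\in\mathbb{Z}} f\big((m+u_{c,d})\,v_{c,d}\big)-\delta_{c\mid n}\,f(-n)-\delta_{d\mid n}\,f(0).$$
   Context: For $c,d\in\mathbb{N}$ with $\gcd(c,d)\mid n$: $B=\{b\in\mathbb{Z}:\exists a\in\mathbb{Z},\ ad-bc=n\}$, $b^*$ is an element of $B$ of minimal absolute value, $u_{c,d}=b^*\gcd(c,d)/d$, and $v_{c,d}=cd/\gcd(c,d)$. (The value of $u_{c,d}$ depends on the choice of $b^*$ only up to an integer, which does not affect the sum over $m\in\mathbb{Z}$.) $\delta_{c\mid n}$ equals $1$ if $c$ divides $n$ and $0$ otherwise; similarly $\delta_{d\mid n}$. *)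

(* Defs.v *)
From Stdlib Require Import ZArith Znumtheory Reals Lra Lia List.
From Coquelicot Require Import Coquelicot.
Open Scope R_scope.

Definition lsum {I : Type} (g : I -> C) (l : list I) : C :=
  fold_right (fun i acc => Cplus (g i) acc) (RtoC 0) l.

Definition lsumR {I : Type} (g : I -> R) (l : list I) : R :=
  fold_right (fun i acc => g i + acc) 0 l.

Definition AbsSummable {I : Type} (g : I -> C) : Prop :=
  exists M : R, forall l : list I, NoDup l -> lsumR (fun i => Cmod (g i)) l <= M.

Definition HasSum {I : Type} (g : I -> C) (S : C) : Prop :=
  AbsSummable g /\
  forall eps : R, 0 < eps ->
    exists l0 : list I, forall l : list I, NoDup l -> incl l0 l ->
      Cmod (Cminus (lsum g l) S) < eps.

(* The family summed in T_n(c,d): indexed by pairs (a,b) in Z x Z, equal to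
   f(bc) when a,b are nonzero and ad - bc = n, and 0 otherwise (zero extension
   of the sum over the solution set). *)
Definition T_family (n c d : Z) (f : Z -> C) (p : Z * Z) : C :=
  let (a, b) := p in
  if (negb (a =? 0)%Z && negb (b =? 0)%Z && (a * d - b * c =? n)%Z)%bool
  then f (b * c)%Z else RtoC 0.

Definition in_B (n c d b : Z) : Prop := exists a : Z, (a * d - b * c)%Z = n.

Definition is_bstar (n c d bs : Z) : Prop :=
  in_B n c d bs /\ forall b, in_B n c d b -> (Z.abs bs <= Z.abs b)%Z.

Definition u_cd (c d bs : Z) : R := IZR bs * IZR (Z.gcd c d) / IZR d.

Definition v_cd (c d : Z) : Z := (c * d / Z.gcd c d)%Z.

(* The integer (m + u_{c,d}) v_{c,d}, written out: m v + b* c. *)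
Definition uv_arg (c d bs m : Z) : Z := (m * v_cd c d + bs * c)%Z.

Lemma uv_arg_spec (c d bs m : Z) : (0 < c)%Z -> (0 < d)%Z ->
  IZR (uv_arg c d bs m) = (IZR m + u_cd c d bs) * IZR (v_cd c d).
Proof.
  intros Hc Hd.
  unfold uv_arg, u_cd, v_cd.
  set (g := Z.gcd c d).
  assert (Hg : (0 < g)%Z).
  { unfold g. pose proof (Z.gcd_nonneg c d).
    destruct (Z.eq_dec (Z.gcd c d) 0) as [E|E]; [|lia].
    apply Z.gcd_eq_0 in E; lia. }
  destruct (Z.gcd_divide_l c d) as [k Hk]. fold g in Hk.
  assert (Hv : (c * d / g = k * d)%Z).
  { rewrite Hk. replace (k * g * d)%Z with (k * d * g)%Z by ring.
    apply Z.div_mul; lia. }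
  rewrite Hv. clearbody g. rewrite Hk.
  rewrite plus_IZR, !mult_IZR.
  assert (IZR g <> 0) by (apply not_0_IZR; lia).
  assert (IZR d <> 0) by (apply not_0_IZR; lia).
  field; auto.
Qed.

Definition M_family (c d bs : Z) (f : Z -> C) (m : Z) : C :=
  f (uv_arg c d bs m).

(* Main.v *)
Require Import Defs.
From Stdlib Require Import ZArith Znumtheory Reals Lra Lia List.
From Coquelicot Require Import Coquelicot.
Open Scope R_scope.

Ltac ceq := repeat match goal with x : C |- _ => destruct x end;
  unfold Cminus, Cplus, Copp, RtoC; simpl; apply injective_projections; simpl; ring.

Lemma C_sub0 (x : C) : Cminus x (RtoC 0) = x. Proof. ceq. Qed.

Lemma lsum_zero {I} (h : I -> C) l : (forall i, h i = RtoC 0) -> lsum h l = RtoC 0.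
Proof. intros H; induction l; simpl; auto. rewrite IHl, H. ceq. Qed.

Lemma lsumR_zero {I} (h : I -> C) l : (forall i, h i = RtoC 0) -> lsumR (fun i => Cmod (h i)) l = 0.
Proof. intros H; induction l; simpl; auto. rewrite IHl, H, Cmod_0. ring. Qed.

Lemma HasSum_zero {I} (h : I -> C) : (forall i, h i = RtoC 0) -> HasSum h (RtoC 0).
Proof.
  intros H. split.
  - exists 0. intros l _. rewrite lsumR_zero; auto; lra.
  - intros eps He. exists nil. intros l _ _. rewrite lsum_zero by auto.
    replace (Cminus (RtoC 0) (RtoC 0)) with (RtoC 0) by ceq. rewrite Cmod_0. lra.
Qed.

Lemma lsum_map {I J} (g : J -> C) (psi : I -> J) l : lsum g (map psi l) = lsum (fun i => g (psi i)) l.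
Proof. induction l; simpl; congruence. Qed.
Lemma lsumR_map {I J} (g : J -> R) (psi : I -> J) l : lsumR g (map psi l) = lsumR (fun i => g (psi i)) l.
Proof. induction l; simpl; congruence. Qed.

Lemma lsum_filter {I} (h : I -> C) (t : I -> bool) l :
  (forall i, t i = false -> h i = RtoC 0) -> lsum h l = lsum h (filter t l).
Proof.
  intros H; induction l; simpl; auto. destruct (t a) eqn:E; simpl; rewrite IHl; auto.
  rewrite H by auto. ceq.
Qed.
Lemma lsumR_filter {I} (h : I -> C) (t : I -> bool) l :
  (forall i, t i = false -> h i = RtoC 0) ->
  lsumR (fun i => Cmod (h i)) l = lsumR (fun i => Cmod (h i)) (filter t l).
Proof.
  intros H; induction l; simpl; auto. destruct (t a) eqn:E; simpl; rewrite IHl; auto.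
  rewrite H, Cmod_0 by auto. ring.
Qed.
Lemma lsum_ext {I} (g h : I -> C) l : (forall i, In i l -> g i = h i) -> lsum g l = lsum h l.
Proof. induction l; simpl; intros; auto. rewrite H, IHl; auto. Qed.
Lemma lsumR_ext {I} (g h : I -> R) l : (forall i, In i l -> g i = h i) -> lsumR g l = lsumR h l.
Proof. induction l; simpl; intros; auto. rewrite H, IHl; auto. Qed.

Lemma HasSum_transfer {I J} (g : J -> C) (h : I -> C) (phi : J -> I) (psi : I -> J)
  (t : I -> bool) S :
  HasSum g S ->
  (forall j, psi (phi j) = j) ->
  (forall j, t (phi j) = true) ->
  (forall i, t i = true -> phi (psi i) = i) ->
  (forall i, h i = if t i then g (psi i) else RtoC 0) ->
  HasSum h S.
Proof.
  intros [[M HM] HS] H1 H2 H3 H4.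
  assert (Hz : forall i, t i = false -> h i = RtoC 0) by (intros i E; rewrite H4, E; auto).
  assert (Hnd : forall l, NoDup l -> NoDup (map psi (filter t l))).
  { intros l Hl. apply NoDup_map_NoDup_ForallPairs; [|apply NoDup_filter; auto].
    intros x y Hx Hy E. apply filter_In in Hx, Hy.
    rewrite <- (H3 x), <- (H3 y) by tauto. congruence. }
  assert (Heq : forall l, lsum h l = lsum g (map psi (filter t l))).
  { intros l. rewrite (lsum_filter h t) by auto. rewrite lsum_map. apply lsum_ext.
    intros i Hi. apply filter_In in Hi. rewrite H4. destruct Hi as [_ ->]. auto. }
  split.
  - exists M. intros l Hl. rewrite (lsumR_filter h t) by auto.
    specialize (HM _ (Hnd l Hl)). rewrite lsumR_map in HM.
    erewrite lsumR_ext; [exact HM|]. intros i Hi. apply filter_In in Hi.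
    rewrite H4. destruct Hi as [_ ->]. auto.
  - intros eps He. destruct (HS eps He) as [l0 Hl0]. exists (map phi l0).
    intros l Hl Hinc. rewrite Heq. apply Hl0; auto.
    intros j Hj. rewrite <- (H1 j). apply in_map. apply filter_In. split; auto.
    apply Hinc. apply in_map; auto.
Qed.

Lemma lsum_kill_none {J} (g g' : J -> C) (p : J -> bool) l :
  (forall j, g' j = if p j then RtoC 0 else g j) -> (forall j, In j l -> p j = false) ->
  lsum g' l = lsum g l.
Proof. intros H1 H2. apply lsum_ext. intros i Hi. rewrite H1, H2; auto. Qed.

Lemma lsum_kill {J} (g g' : J -> C) (p : J -> bool) j0 l :
  p j0 = true -> (forall j, p j = true -> j = j0) ->
  (forall j, g' j = if p j then RtoC 0 else g j) ->
  NoDup l -> In j0 l -> lsum g' l = Cminus (lsum g l) (g j0).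
Proof.
  intros Hp Hu Hg. induction l as [|x r IH]; intros Hnd Hin; [destruct Hin|].
  inversion Hnd; subst. simpl. destruct (p x) eqn:E.
  - apply Hu in E; subst. rewrite Hg, Hp.
    rewrite (lsum_kill_none g g' p) by (auto; intros j Hj; destruct (p j) eqn:E'; auto;
      apply Hu in E'; subst; contradiction).
    ceq.
  - assert (x <> j0) by congruence. destruct Hin as [->|Hin]; [congruence|].
    rewrite IH, Hg, E by auto. ceq.
Qed.

Lemma HasSum_kill {J} (g g' : J -> C) (p : J -> bool) j0 S :
  HasSum g S -> p j0 = true -> (forall j, p j = true -> j = j0) ->
  (forall j, g' j = if p j then RtoC 0 else g j) ->
  HasSum g' (Cminus S (g j0)).
Proof.
  intros [[M HM] HS] Hp Hu Hg. split.
  - exists M. intros l Hl. eapply Rle_trans; [|apply (HM l Hl)].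
    clear -Hg. induction l; simpl; [lra|]. rewrite Hg. destruct (p a).
    + rewrite Cmod_0. pose proof (Cmod_ge_0 (g a)). lra.
    + lra.
  - intros eps He. destruct (HS eps He) as [l0 Hl0]. exists (j0 :: l0).
    intros l Hl Hinc. rewrite (lsum_kill g g' p j0) by (auto; apply Hinc; left; auto).
    replace (Cminus (Cminus (lsum g l) (g j0)) (Cminus S (g j0))) with (Cminus (lsum g l) S) by ceq.
    apply Hl0; auto. intros x Hx; apply Hinc; right; auto.
Qed.

From Stdlib Require Import FunctionalExtensionality.

Lemma key (a0 bs c' d' g a b n : Z) :
  (0 < g)%Z -> (0 < d')%Z -> Z.gcd c' d' = 1%Z ->
  (a0 * (d' * g) - bs * (c' * g) = n)%Z -> (a * (d' * g) - b * (c' * g) = n)%Z ->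
  exists k, a = (a0 + k * c')%Z /\ b = (bs + k * d')%Z.
Proof.
  intros Hg Hd Hcd H0 H.
  assert (E : ((a - a0) * d' = (b - bs) * c')%Z).
  { apply (Z.mul_reg_r _ _ g); [lia|]. rewrite <- (Z.sub_0_r 0) in *. nia. }
  assert (Hdv : (d' | c' * (b - bs))%Z) by (exists (a - a0)%Z; lia).
  apply Z.gauss in Hdv; [|rewrite Z.gcd_comm; auto].
  destruct Hdv as [k Hk]. exists k. split; [|lia].
  assert ((a - a0) * d' = (k * c') * d')%Z by (rewrite E, Hk; ring).
  apply Z.mul_reg_r in H1; lia.
Qed.

Theorem lemma2p4 (n c d : Z) (f : Z -> C) :
  n <> 0%Z -> (0 < c)%Z -> (0 < d)%Z ->
  (~ (Z.gcd c d | n)%Z -> HasSum (T_family n c d f) (RtoC 0)) /\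
  ((Z.gcd c d | n)%Z ->
   forall bs : Z, is_bstar n c d bs ->
   forall S : C, HasSum (M_family c d bs f) S ->
   HasSum (T_family n c d f)
     (Cminus (Cminus S (if Zdivide_dec c n then f (- n)%Z else RtoC 0))
             (if Zdivide_dec d n then f 0%Z else RtoC 0))).
Proof.
  intros Hn Hc Hd. split.
  - intros Hg. apply HasSum_zero. intros [a b]. unfold T_family.
    destruct (a * d - b * c =? n)%Z eqn:E; [|rewrite !Bool.andb_false_r; auto].
    exfalso; apply Hg. apply Z.eqb_eq in E. rewrite <- E.
    apply Z.divide_sub_r; apply Z.divide_mul_r; [apply Z.gcd_divide_r|apply Z.gcd_divide_l].
  - intros _ bs [[a0 Ha0] _] S HS.
    set (g := Z.gcd c d) in *.
    assert (Hg : (0 < g)%Z).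
    { pose proof (Z.gcd_nonneg c d). destruct (Z.eq_dec g 0) as [E|E]; [|lia].
      apply Z.gcd_eq_0 in E; lia. }
    destruct (Z.gcd_divide_l c d) as [c' Hc']. destruct (Z.gcd_divide_r c d) as [d' Hd'].
    fold g in Hc', Hd'.
    assert (Hcd : Z.gcd c' d' = 1%Z).
    { pose proof (Z.gcd_mul_mono_r_nonneg c' d' g ltac:(lia)) as E.
      rewrite <- Hc', <- Hd' in E. fold g in E.
      apply (Z.mul_reg_r _ _ g); lia. }
    assert (Hv : v_cd c d = (c' * d' * g)%Z).
    { unfold v_cd. fold g. rewrite Hc', Hd'.
      replace (c' * g * (d' * g))%Z with (c' * d' * g * g)%Z by ring. apply Z.div_mul; lia. }
    assert (Huv : forall m, uv_arg c d bs m = ((bs + m * d') * c)%Z).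
    { intros m. unfold uv_arg. rewrite Hv, Hc'. ring. }
    clearbody g. subst c d.
    assert (Hc'0 : (0 < c')%Z) by nia. assert (Hd'0 : (0 < d')%Z) by nia.
    set (am := fun m => (a0 + m * c')%Z). set (bm := fun m => (bs + m * d')%Z).
    set (g1 := fun m => if (am m =? 0)%Z then RtoC 0 else M_family (c' * g) (d' * g) bs f m).
    set (g2 := fun m => if (bm m =? 0)%Z then RtoC 0 else g1 m).
    assert (Hgood : forall m, (am m * (d' * g) - bm m * (c' * g) = n)%Z).
    { intros m. unfold am, bm. rewrite <- Ha0. ring. }
    assert (HS1 : HasSum g1 (Cminus S (if Zdivide_dec (c' * g) n then f (- n)%Z else RtoC 0))).
    { destruct (Zdivide_dec (c' * g) n) as [[q Hq]|Hnd].
      - destruct (key a0 bs c' d' g 0 (- q) n) as [k [Hk1 Hk2]]; auto. lia.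
        replace (f (-n)%Z) with (M_family (c' * g) (d' * g) bs f k).
        + apply (HasSum_kill _ _ (fun m => (am m =? 0)%Z)); auto.
          * apply Z.eqb_eq. unfold am; lia.
          * intros j Hj. apply Z.eqb_eq in Hj. unfold am in Hj. nia.
        + unfold M_family. rewrite Huv. f_equal. lia.
      - rewrite C_sub0. replace g1 with (M_family (c' * g) (d' * g) bs f); auto.
        apply functional_extensionality. intros m. unfold g1.
        destruct (am m =? 0)%Z eqn:E; auto. exfalso. apply Hnd.
        apply Z.eqb_eq in E. exists (- bm m)%Z. rewrite <- (Hgood m), E. ring. }
    assert (HS2 : HasSum g2 (Cminus (Cminus S (if Zdivide_dec (c' * g) n then f (- n)%Z else RtoC 0))
             (if Zdivide_dec (d' * g) n then f 0%Z else RtoC 0))).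
    { destruct (Zdivide_dec (d' * g) n) as [[q Hq]|Hnd].
      - destruct (key a0 bs c' d' g q 0 n) as [k [Hk1 Hk2]]; auto. lia.
        replace (f 0%Z) with (g1 k).
        + apply (HasSum_kill _ _ (fun m => (bm m =? 0)%Z)); auto.
          * apply Z.eqb_eq. unfold bm; lia.
          * intros j Hj. apply Z.eqb_eq in Hj. unfold bm in Hj. nia.
        + unfold g1. replace (am k =? 0)%Z with false.
          * unfold M_family. rewrite Huv. f_equal. lia.
          * symmetry; apply Z.eqb_neq. unfold am. intros E. assert (q = 0%Z) by lia. subst q. lia.
      - rewrite C_sub0. replace g2 with g1; auto.
        apply functional_extensionality. intros m. unfold g2.
        destruct (bm m =? 0)%Z eqn:E; auto. exfalso. apply Hnd.
        apply Z.eqb_eq in E. exists (am m). rewrite <- (Hgood m), E. ring. }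
    apply (HasSum_transfer g2 _ (fun m => (am m, bm m)) (fun p => ((snd p - bs) / d')%Z)
             (fun p => (fst p * (d' * g) - snd p * (c' * g) =? n)%Z)); auto.
    + intros j. simpl. unfold bm. replace (bs + j * d' - bs)%Z with (j * d')%Z by ring.
      apply Z.div_mul; lia.
    + intros j. simpl. apply Z.eqb_eq. apply Hgood.
    + intros [a b] E. simpl in *. apply Z.eqb_eq in E.
      destruct (key a0 bs c' d' g a b n) as [k [-> ->]]; auto.
      replace (bs + k * d' - bs)%Z with (k * d')%Z by ring.
      rewrite Z.div_mul by lia. reflexivity.
    + intros [a b]. unfold T_family. simpl.
      destruct (a * (d' * g) - b * (c' * g) =? n)%Z eqn:E; [|rewrite !Bool.andb_false_r; auto].
      apply Z.eqb_eq in E.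
      destruct (key a0 bs c' d' g a b n) as [k [-> ->]]; auto.
      replace (bs + k * d' - bs)%Z with (k * d')%Z by ring.
      rewrite Z.div_mul by lia. unfold g2, g1, am, bm.
      destruct (a0 + k * c' =? 0)%Z; destruct (bs + k * d' =? 0)%Z; simpl; auto.
      unfold M_family. rewrite Huv. reflexivity.
Qed.
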